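(* Let $0\le r\le n$ and let $T=P(x,u_0,\dots,u_r)$, with $P$ a real polynomial, satisfy $T(\mathcal P_n)\subset\mathcal P_n$. If $r<n/2$, then $P$ has total degree at most $1$ in the variables $u_0,\dots,u_r$ (i.e. $T$ is linear up to an additive term $p(x)$). If $r<2n/3$, then $P$ has total degree at most $2$ in $u_0,\dots,u_r$.
   Context: Operators of order $\le r$ are identified with polynomials $P(x,u_0,\dots,u_r)$ acting on smooth $f$ by $P[f](x)=P(x,f(x),f'(x),\dots,f^{(r)}(x))$. $\mathcal P_s$ denotes the space of real polynomials in $x$ of degree at most $s$. *)

(* Defs.v *)
From HB Require Import structures.
From mathcomp Require Import all_boot all_order all_algebra.
From mathcomp Require Import reals.
From mathcomp Require Import mpoly.
Set Implicit Arguments. Unset Strict Implicit. Unset Printing Implicit Defensive.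
Import GRing.Theory Num.Theory.
Local Open Scope ring_scope.

(* A differential operator of order <= r, P(x, u_0, ..., u_r), is encoded as a
   multivariate polynomial in the r+1 variables u_0..u_r whose coefficients
   are real polynomials in x. *)
Definition diffop (R : realType) (r : nat) := {mpoly {poly R}[r.+1]}.

Definition apply_op (R : realType) (r : nat) (P : diffop R r) (f : {poly R})
  : {poly R} := P.@[fun i : 'I_r.+1 => f^`(i)].

Definition inPs (R : realType) (s : nat) (f : {poly R}) : Prop := (size f <= s.+1)%N.

(* total degree in u_0..u_r at most d (msize = total degree + 1, 0 for P = 0) *)
Definition udeg_le (R : realType) (r : nat) (P : diffop R r) (d : nat) : Prop :=
  (msize P <= d.+1)%N.

(* Main.v *)
Require Import Defs.
From HB Require Import structures.
From mathcomp Require Import all_boot all_order all_algebra.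
From mathcomp Require Import reals.
From mathcomp Require Import mpoly.
From mathcomp Require Import zify.
Set Implicit Arguments. Unset Strict Implicit. Unset Printing Implicit Defensive.
Import GRing.Theory Num.Theory.
Local Open Scope ring_scope.



Section PolyFacts.
Variable R : realType.

Lemma poly_all_roots0 (p : {poly R}) : (forall x, p.[x] = 0) -> p = 0.
Proof.
move=> H; apply/eqP; apply/negPn/negP => nz.
suff: (size p < size p)%N by rewrite ltnn.
rewrite -{1}(size_iota 0 (size p)) -(size_map (fun i : nat => i%:R : R)).
apply: max_poly_roots nz _ _.
  by apply/allP => x /mapP [i _ ->]; apply/rootP.
rewrite map_inj_uniq ?iota_uniq //; move=> a b /eqP; rewrite eqr_nat => /eqP //.
Qed.

Lemma derivn_XsubC (c : R) (n i : nat) :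
  (('X - c%:P) ^+ n)^`(i) = ('X - c%:P) ^+ (n - i) *+ n ^_ i.
Proof.
elim: i => [|i IH]; first by rewrite derivn0 subn0 ffactn0.
rewrite derivnS IH derivMn deriv_exp derivXsubC mul1r ffactnSr -mulrnA.
by rewrite mulnC -subnS.
Qed.
End PolyFacts.



Lemma mpoly_gen_ind (N : nat) (K : comRingType) (T : {mpoly K[N]} -> Prop) :
  (forall c, T c%:MP) -> (forall i, T 'X_i) ->
  (forall p q, T p -> T q -> T (p + q)) -> (forall p q, T p -> T q -> T (p * q)) ->
  forall p, T p.
Proof.
move=> HC HX HD HM p; rewrite (mpolyE p).
apply: (big_ind T); [by rewrite -mpolyC0 | exact: (HD) | move=> m _]. rewrite -mul_mpolyC; apply: (HM) => //.
rewrite mpolyXE_id; apply: (big_ind T); [by rewrite -mpolyC1 | exact: (HM) | move=> i _]. elim: (m i) => [|k IH]; first by rewrite expr0 -mpolyC1.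
by rewrite exprS; apply: (HM).
Qed.

Lemma subUU N (i : 'I_N) : (U_(i) - U_(i))%MM = 0%MM.
Proof. by apply/mnmP => j; rewrite mnmBE subnn mnm0E. Qed.

Section Taylor.
Variables (K : comRingType) (r : nat).
Local Notation op := {mpoly {poly K}[r.+1]}.
Definition app (Q : op) (f : {poly K}) : {poly K} := Q.@[fun i : 'I_r.+1 => f^`(i)].

Definition dir (Q : op) (g : {poly K}) : op :=
  \sum_(i < r.+1) (g^`(i))%:MP * Q^`M(i).

Definition Phi (f g : {poly K}) (Q : op) : {poly {poly K}} :=
  (map_mpoly (@polyC {poly K}) Q).@[fun i : 'I_r.+1 => (f^`(i))%:P + 'X * (g^`(i))%:P].

Lemma appD (p q : op) f : app (p + q) f = app p f + app q f.
Proof. exact: mevalD. Qed.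
Lemma appM (p q : op) f : app (p * q) f = app p f * app q f.
Proof. exact: mevalM. Qed.
Lemma PhiD f g (p q : op) : Phi f g (p + q) = Phi f g p + Phi f g q.
Proof. rewrite /Phi raddfD; exact: mevalD. Qed.
Lemma PhiM f g (p q : op) : Phi f g (p * q) = Phi f g p * Phi f g q.
Proof. rewrite /Phi rmorphM; exact: mevalM. Qed.
Lemma dirD (p q : op) g : dir (p + q) g = dir p g + dir q g.
Proof. rewrite /dir -big_split; apply: eq_bigr => i _ /=; by rewrite mderivD mulrDr. Qed.
Lemma dirM (p q : op) g : dir (p * q) g = dir p g * q + p * dir q g.
Proof.
rewrite /dir mulr_suml mulr_sumr -big_split /=.
apply: eq_bigr => i _; rewrite mderivM mulrDr.
by congr (_ + _); [exact: mulrA | exact: mulrCA].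
Qed.

Lemma Phi_props (f g : {poly K}) (Q : op) :
  [/\ forall e : K, (Phi f g Q).[e%:P] = app Q (f + e *: g),
      (Phi f g Q)`_0 = app Q f &
      (Phi f g Q)`_1 = app (dir Q g) f].
Proof.
elim/mpoly_gen_ind: Q.
- move=> c; rewrite /Phi /app /dir map_mpolyC /= !mevalC; split.
  + by move=> e; rewrite mevalC; apply: hornerC.
  + exact: (coefC c 0).
  + rewrite big1 ?meval0; first exact: (coefC c 1).
    by move=> i _; rewrite mderivC mulr0.
- move=> i; rewrite /Phi /app /dir map_mpolyX !mevalXU; split.
  + by move=> e; rewrite hornerD hornerC hornerM hornerX hornerC mevalXU derivnD derivnZ mul_polyC.
  + by rewrite coefD coefC coefXM coefC /= addr0.
  + rewrite coefD coefC coefXM coefC /= add0r (bigD1 i) //= big1 ?addr0.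
      by rewrite mderivX mnm1E eqxx subUU mpolyX0 scale1r mulr1 mevalC.
    by move=> j ji; rewrite mderivX mnm1E eq_sym (negbTE ji) scale0r mulr0.
- move=> p q [Hp0 Hp1 Hp2] [Hq0 Hq1 Hq2]; rewrite PhiD dirD; split.
  + by move=> e; rewrite hornerD appD; congr (_ + _); [exact: Hp0 | exact: Hq0].
  + by rewrite coefD appD; congr (_ + _); [exact: Hp1 | exact: Hq1].
  + by rewrite coefD appD; congr (_ + _); [exact: Hp2 | exact: Hq2].
- move=> p q [Hp0 Hp1 Hp2] [Hq0 Hq1 Hq2]; rewrite PhiM dirM; split.
  + by move=> e; rewrite hornerM appM; congr (_ * _); [exact: Hp0 | exact: Hq0].
  + by rewrite coef0M appM; congr (_ * _); [exact: Hp1 | exact: Hq1].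
  + rewrite coefM big_ord_recr big_ord_recr big_ord0 /= add0r appD !appM addrC.
    by congr (_ + _); congr (_ * _); [exact: Hp2 | exact: Hq1 | exact: Hp1 | exact: Hq2].
Qed.
End Taylor.




Section Pres.
Variables (R : realType) (n r : nat).

Lemma coef_pres (F : {poly {poly R}}) :
  (forall e : R, (size (F.[e%:P]) <= n.+1)%N) -> forall j, (size (F`_j)%R <= n.+1)%N.
Proof.
move=> H j; apply/leq_sizeP => p hp.
pose psi : {poly R} := \poly_(i < size F) (F`_i)`_p.
have Hpsi : psi = 0.
  apply: poly_all_roots0 => e.
  rewrite /psi horner_poly.
  have -> : \sum_(i < size F) (F`_i)`_p * e ^+ i = (F.[e%:P])`_p.
    rewrite horner_coef coef_sum; apply: eq_bigr => i _.
    by rewrite -rmorphXn /= coefMC.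
  by move/leq_sizeP: (H e) => /(_ p hp).
case: (ltnP j (size F)) => hj.
  by have := congr1 (fun q : {poly R} => q`_j) Hpsi; rewrite coef_poly hj coef0.
by rewrite (nth_default _ hj) coef0.
Qed.

Definition pres (Q : {mpoly {poly R}[r.+1]}) :=
  forall f : {poly R}, (size f <= n.+1)%N -> (size (app Q f) <= n.+1)%N.

Lemma pres_dir Q (g : {poly R}) : pres Q -> (size g <= n.+1)%N -> pres (dir Q g).
Proof.
move=> HQ Hg f Hf; have [H0 _ H2] := Phi_props f g Q.
have := @coef_pres (Phi f g Q) _ 1%N; rewrite H2; apply => e.
rewrite H0; apply: HQ.
apply: leq_trans (size_add _ _) _; rewrite geq_max Hf /=.
exact: leq_trans (size_scale_leq _ _) Hg.
Qed.

Definition dirs (Q : {mpoly {poly R}[r.+1]}) (s : R) : {mpoly {poly R}[r.+1]} :=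
  \sum_(i < r.+1) ((('X - s%:P) ^+ (r - i)) *+ n ^_ i)%:MP * Q^`M(i).

Lemma dir_XsubC (hr : (r <= n)%N) Q (s : R) :
  dir Q (('X - s%:P) ^+ n) = (('X - s%:P) ^+ (n - r))%:MP * dirs Q s.
Proof.
rewrite /dir /dirs mulr_sumr; apply: eq_bigr => i _.
rewrite derivn_XsubC mulrA -mpolyCM; congr (_%:MP * _).
rewrite mulrnAr -exprD; congr (_ ^+ _ *+ _).
have := ltn_ord i; lia.
Qed.

Lemma dir_mulC (Q : {mpoly {poly R}[r.+1]}) (c : {poly R}) g : dir (c%:MP * Q) g = c%:MP * dir Q g.
Proof.
rewrite /dir mulr_sumr; apply: eq_bigr => i _.
by rewrite mderiv_mulC mulrCA.
Qed.

Lemma size_prod_XsubC_pow (ss : seq R) k :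
  size (\prod_(s <- ss) ('X - s%:P) ^+ k) = (size ss * k).+1.
Proof.
elim: ss => [|s ss IH]; first by rewrite big_nil size_poly1.
rewrite big_cons size_mul ?IH ?size_exp_XsubC /=; first by lia.
  by rewrite -size_poly_eq0 size_exp_XsubC.
by rewrite -size_poly_eq0 IH.
Qed.

Lemma pres_chain (hr : (r <= n)%N) (ss : seq R) : forall Q (c : {poly R}),
  pres (c%:MP * Q) ->
  pres ((c * \prod_(s <- ss) ('X - s%:P) ^+ (n - r))%:MP * foldl dirs Q ss).
Proof.
elim: ss => [|s ss IH] Q c HQ /=; first by rewrite big_nil mulr1.
have H1 := pres_dir HQ (eq_leq (size_exp_XsubC n s)).
rewrite dir_mulC dir_XsubC // mulrA -mpolyCM in H1.
have := IH _ _ H1.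
by rewrite big_cons mulrA.
Qed.
End Pres.



Section Msize.
Variables (R : realType) (n r : nat).
Local Notation op := {mpoly {poly R}[r.+1]}.

Lemma mcoeff_dirs (Q : op) s m : (dirs n Q s)@_m =
  \sum_(i < r.+1) ((('X - s%:P) ^+ (r - i)) *+ n ^_ i) * (Q@_(m + U_(i)) *+ (m i).+1).
Proof.
rewrite /dirs raddf_sum; apply: eq_bigr => i _.
apply: (etrans (mcoeffCM _ _ _)); congr (_ * _); exact: mcoeff_mderiv.
Qed.

Lemma msize_le (p : op) k : (forall m, (k <= mdeg m)%N -> p@_m = 0) -> (msize p <= k)%N.
Proof.
move=> H; rewrite msizeE; apply/bigmax_leqP_seq => m hm _.
rewrite ltnNge; apply/negP => hk; move: hm; rewrite mcoeff_msupp (H m hk) eqxx.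
by [].
Qed.

Lemma msize_dirs (Q : op) s k : (msize Q <= k.+1)%N -> (msize (dirs n Q s) <= k)%N.
Proof.
move=> hQ; apply: msize_le => m hm; rewrite mcoeff_dirs big1 // => i _.
rewrite memN_msupp_eq0 ?mul0rn ?mulr0 //; apply: msize_mdeg_ge.
by rewrite mdegD mdeg1; lia.
Qed.

Lemma msize_iter (ss : seq R) : forall (Q : op) k,
  (msize Q <= k + size ss)%N -> (msize (foldl (@dirs R n r) Q ss) <= k)%N.
Proof.
elim: ss => [|s ss IH] Q k /= hQ; first by rewrite addn0 in hQ.
apply: IH; apply: msize_dirs; by rewrite -addnS.
Qed.
End Msize.



Section Vanish.
Variables (R : realType) (n r : nat).
Local Notation op := {mpoly {poly R}[r.+1]}.

Lemma iter_vanish (hr : (r <= n)%N) D (hD : (n < D * (n - r))%N) (P : op) (ss : seq R) :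
  pres n P -> (msize P <= D.+1)%N -> size ss = D -> foldl (@dirs R n r) P ss = 0.
Proof.
move=> HP hP hs.
have H1 : pres n ((1 * \prod_(s <- ss) ('X - s%:P) ^+ (n - r))%:MP *
                  foldl (@dirs R n r) P ss).
  by apply: pres_chain => //; rewrite mpolyC1 mul1r.
move: H1; set Rr := foldl _ P ss => H1.
have hR : (msize Rr <= 1)%N by apply: msize_iter; rewrite hs add1n.
move: H1; rewrite (msize1_polyC hR); set c0 := Rr@_0 => H1.
have := H1 0 ltac:(by rewrite size_poly0).
rewrite -mpolyCM /app mevalC mul1r.
case: (eqVneq c0 0) => [->|nz]; first by rewrite mpolyC0.
have nzC : \prod_(s <- ss) ('X - s%:P) ^+ (n - r) != 0.
  by rewrite -size_poly_eq0 size_prod_XsubC_pow.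
rewrite size_mul // size_prod_XsubC_pow.
have : (0 < size c0)%N by rewrite size_poly_gt0.
move: hD; rewrite -hs; move: (size ss * (n - r))%N (size c0) => a b h1 h2; rewrite addSn /= => h3; exfalso; clear -h1 h2 h3; lia.
Qed.
End Vanish.



Section Key.
Variables (R : realType) (n r : nat).
Local Notation op := {mpoly {poly R}[r.+1]}.

Lemma key (hr : (r <= n)%N) (P : op) D :
  (forall s, (msize (dirs n P s) <= D)%N) -> (msize P <= D.+2)%N -> (msize P <= D.+1)%N.
Proof.
move=> Hs hP; apply: msize_le => M hM.
case: (ltnP D.+1 (mdeg M)) => hM2.
  by apply: memN_msupp_eq0; apply: msize_mdeg_ge; clear -hP hM2; lia.
have hMD : mdeg M = D.+1 by clear -hM hM2; lia.
have /existsP [i Hi] : [exists i : 'I_r.+1, M i != 0%N].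
  case: (boolP [exists i : 'I_r.+1, M i != 0%N]) => // /existsPn H.
  have : M = 0%MM by apply/mnmP => j; rewrite mnm0E; apply/eqP; move: (H j); rewrite negbK.
  by move=> HM; move: hMD; rewrite HM mdeg0.
pose m := (M - U_(i))%MM.
have HMm : M = (m + U_(i))%MM.
  rewrite /m submK //; apply/mnm_lepP => j; rewrite mnm1E.
  by case: eqP => [<-|]; clear -Hi; lia.
have hm : mdeg m = D by move: hMD; rewrite HMm mdegD mdeg1; clear; lia.
apply: poly_all_roots0 => x0.
pose a (j : 'I_r.+1) : R := (n ^_ j)%:R * ((P@_(m + U_(j))).[x0] * (m j).+1%:R).
pose psi : {poly R} := \sum_(j < r.+1) a j *: 'X^(r - j).
have Hpsi : psi = 0.
  apply: poly_all_roots0 => t.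
  have : (dirs n P (x0 - t))@_m = 0.
    by apply: memN_msupp_eq0; apply: msize_mdeg_ge; rewrite hm.
  rewrite mcoeff_dirs => /(congr1 (fun q : {poly R} => q.[x0])).
  rewrite horner0 horner_sum => <-.
  rewrite /psi horner_sum; apply: eq_bigr => j _.
  rewrite hornerZ hornerXn hornerM hornerMn horner_exp hornerXsubC hornerMn /a.
  have ht : x0 - (x0 - t) = t := subKr x0 t.
  by rewrite ht mulr_natr mulr_natl !mulrnAl mulrnAr mulrC.
have : psi`_(r - i) = 0 by rewrite Hpsi coef0.
rewrite /psi coef_sum (bigD1 i) //= big1 ?addr0.
  rewrite coefZ coefXn eqxx mulr1 /a => /eqP; rewrite !mulf_eq0.
  have hf : (n ^_ i == 0)%N = false.
    by rewrite eqn0Ngt ffact_gt0; have := ltn_ord i; clear -hr; lia.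
  by rewrite !pnatr_eq0 hf /= orbF -HMm => /eqP.
move=> j ji; rewrite coefZ coefXn.
have -> : (r - i == r - j)%N = false.
  apply/negbTE; apply: contra ji => /eqP h; apply/eqP/val_inj => /=.
  have := ltn_ord i; have := ltn_ord j; clear -h; lia.
by rewrite mulr0.
Qed.
End Key.



Section Final.
Variables (R : realType) (n r : nat).
Local Notation op := {mpoly {poly R}[r.+1]}.

Lemma descent (hr : (r <= n)%N) D : forall P : op, (msize P <= D.+1)%N ->
  (forall ss : seq R, size ss = D -> foldl (@dirs R n r) P ss = 0) -> (msize P <= D)%N.
Proof.
elim: D => [|D IH] P hP H.
  by have := H [::] erefl; rewrite /= => ->; rewrite msize0.
apply: (@key R n r hr) => // s; apply: IH; first exact: msize_dirs.
by move=> ss hs; have := H (s :: ss); rewrite /= hs; apply.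
Qed.

Lemma final (hr : (r <= n)%N) d (P : op) : pres n P -> (n < d * (n - r))%N -> (msize P <= d)%N.
Proof.
move=> HP hd.
suff H : forall K, (msize P <= d + K)%N -> (msize P <= d)%N by apply: (H (msize P)); rewrite leq_addl.
elim => [|K IH] h; first by rewrite addn0 in h.
apply: IH; rewrite addnS in h; apply: descent => // ss hs.
apply: (@iter_vanish R n r hr (d + K) _ P ss HP h hs).
exact: leq_trans hd (leq_mul (leq_addr K d) (leqnn _)).
Qed.
End Final.

Theorem mainTheorem4 (R : realType) (n r : nat) (P : diffop R r) :
  (r <= n)%N ->
  (forall f : {poly R}, inPs n f -> inPs n (apply_op P f)) ->
  ((2 * r < n)%N -> udeg_le P 1) /\ ((3 * r < 2 * n)%N -> udeg_le P 2).
Proof.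
move=> hr H.
have HP : pres n P by move=> f hf; exact: H f hf.
split => h; rewrite /udeg_le; apply: (@final R n r hr _ P HP); clear -h hr; lia.
Qed.
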